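(* Let $f:\mathbb{R}^2\to\mathbb{R}^2$ be a Topologically Anosov homeomorphism and $z_0\in\mathrm{Fix}(f)$. If $\Omega(f)\neq\{z_0\}$, then there exist $y_0\neq z_0$ and $z\in\mathbb{R}^2$ such that $y_0\in\omega(z)$.
   Context: A homeomorphism $f:\mathbb{R}^2\to\mathbb{R}^2$ is Topologically Anosov (TA) if: (i) there is a continuous strictly positive $\epsilon:\mathbb{R}^2\to\mathbb{R}$ such that for all $x\neq y$ there is $k\in\mathbb{Z}$ with $\|f^k(x)-f^k(y)\|>\epsilon(f^k(x))$; and (ii) for every continuous strictly positive $\epsilon$ there is a continuous strictly positive $\delta$ such that every $\delta$-pseudo-orbit is $\epsilon$-shadowed by an orbit. A $\delta$-pseudo-orbit is a sequence $(x_n)_{n\in\mathbb{Z}}$ with $\|f(x_n)-x_{n+1}\|<\delta(f(x_n))$; it is $\epsilon$-shadowed by the orbit of $x$ if $\|x_n-f^n(x)\|<\epsilon(x_n)$ for all $n$. $\Omega(f)$ is the nonwandering set; $\omega(z)$ is the $\omega$-limit set. *)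

(* Defs.v *)
From Stdlib Require Import Reals ZArith.
Open Scope R_scope.

Definition pt : Type := (R * R)%type.

Definition dist (p q : pt) : R :=
  sqrt ((fst p - fst q) ^ 2 + (snd p - snd q) ^ 2).

Definition cont_map (h : pt -> pt) : Prop :=
  forall x e, 0 < e -> exists d, 0 < d /\
    forall y, dist x y < d -> dist (h x) (h y) < e.

Definition cont_fun (h : pt -> R) : Prop :=
  forall x e, 0 < e -> exists d, 0 < d /\
    forall y, dist x y < d -> Rabs (h x - h y) < e.

Definition cont_pos (e : pt -> R) : Prop :=
  cont_fun e /\ forall x, 0 < e x.

Definition homeo (f g : pt -> pt) : Prop :=
  cont_map f /\ cont_map g /\ (forall x, g (f x) = x) /\ (forall x, f (g x) = x).

Definition iterZ (f g : pt -> pt) (k : Z) (x : pt) : pt :=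
  match k with
  | Z0 => x
  | Zpos p => Nat.iter (Pos.to_nat p) f x
  | Zneg p => Nat.iter (Pos.to_nat p) g x
  end.

Definition expansive (f g : pt -> pt) : Prop :=
  exists e, cont_pos e /\
    forall x y, x <> y -> exists k : Z,
      dist (iterZ f g k x) (iterZ f g k y) > e (iterZ f g k x).

Definition pseudo_orbit (f : pt -> pt) (delta : pt -> R) (xs : Z -> pt) : Prop :=
  forall n : Z, dist (f (xs n)) (xs (n + 1)%Z) < delta (f (xs n)).

Definition shadows (f g : pt -> pt) (e : pt -> R) (xs : Z -> pt) (x : pt) : Prop :=
  forall n : Z, dist (xs n) (iterZ f g n x) < e (xs n).

Definition shadowing (f g : pt -> pt) : Prop :=
  forall e, cont_pos e -> exists delta, cont_pos delta /\
    forall xs, pseudo_orbit f delta xs -> exists x, shadows f g e xs x.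

Definition TA (f g : pt -> pt) : Prop :=
  homeo f g /\ expansive f g /\ shadowing f g.

Definition nonwandering (f : pt -> pt) (x : pt) : Prop :=
  forall r, 0 < r -> exists (n : nat) (y : pt), (1 <= n)%nat /\
    dist y x < r /\ dist (Nat.iter n f y) x < r.

Definition omega_limit (f : pt -> pt) (z y : pt) : Prop :=
  forall r, 0 < r -> forall N : nat, exists n : nat, (N <= n)%nat /\
    dist (Nat.iter n f z) y < r.

(* Main.v *)
From Stdlib Require Import Reals ZArith Lra Lia Psatz ClassicalEpsilon Classical.
From Stdlib Require Rtopology.
Require Import Defs.
Open Scope R_scope.

Lemma dist_tri (p q r : pt) : dist p r <= dist p q + dist q r.
Proof.
  unfold dist.
  set (a := fst p - fst q). set (b := fst q - fst r).
  set (c := snd p - snd q). set (d := snd q - snd r).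
  replace (fst p - fst r) with (a + b) by (unfold a, b; ring).
  replace (snd p - snd r) with (c + d) by (unfold c, d; ring).
  assert (HX : 0 <= a ^ 2 + c ^ 2) by nra.
  assert (HY : 0 <= b ^ 2 + d ^ 2) by nra.
  pose proof (sqrt_sqrt _ HX) as EX. pose proof (sqrt_sqrt _ HY) as EY.
  pose proof (sqrt_pos (a ^ 2 + c ^ 2)). pose proof (sqrt_pos (b ^ 2 + d ^ 2)).
  set (sX := sqrt (a ^ 2 + c ^ 2)) in *. set (sY := sqrt (b ^ 2 + d ^ 2)) in *.
  assert (Hcs : a * b + c * d <= sX * sY).
  { assert (HH: (a*b+c*d)^2 <= (sX*sY)^2).
    { replace ((sX*sY)^2) with ((sX*sX)*(sY*sY)) by ring. rewrite EX, EY. pose proof (pow2_ge_0 (a*d-b*c)). nra. }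
    apply Rsqr_incr_0_var; [unfold Rsqr; nra | apply Rmult_le_pos; assumption]. }
  rewrite <- (sqrt_square (sX + sY)) by lra.
  apply sqrt_le_1_alt. nra.
Qed.

Lemma dist_sym (p q : pt) : dist p q = dist q p.
Proof. unfold dist. f_equal. ring. Qed.

Lemma dist_refl (p : pt) : dist p p = 0.
Proof. unfold dist. replace ((fst p - fst p) ^ 2 + (snd p - snd p) ^ 2) with 0 by ring. apply sqrt_0. Qed.

Lemma dist_fst (p q : pt) : Rabs (fst p - fst q) <= dist p q.
Proof.
  unfold dist. rewrite <- sqrt_Rsqr_abs. apply sqrt_le_1_alt. unfold Rsqr.
  pose proof (pow2_ge_0 (snd p - snd q)). simpl. lra.
Qed.

Lemma dist_snd (p q : pt) : Rabs (snd p - snd q) <= dist p q.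
Proof.
  unfold dist. rewrite <- sqrt_Rsqr_abs. apply sqrt_le_1_alt. unfold Rsqr.
  pose proof (pow2_ge_0 (fst p - fst q)). simpl. lra.
Qed.

Lemma dist_le_abs (p q : pt) : dist p q <= Rabs (fst p - fst q) + Rabs (snd p - snd q).
Proof.
  unfold dist. pose proof (Rabs_pos (fst p - fst q)). pose proof (Rabs_pos (snd p - snd q)).
  rewrite <- (sqrt_square (Rabs (fst p - fst q) + Rabs (snd p - snd q))) by lra.
  apply sqrt_le_1_alt.
  pose proof (Rsqr_abs (fst p - fst q)). pose proof (Rsqr_abs (snd p - snd q)). unfold Rsqr in *. simpl. nra.
Qed.

Lemma bw1 (v : nat -> R) (a c : R) : (forall k, Rabs (v k - a) <= c) ->
  exists l, forall r, 0 < r -> forall N, exists k, (N <= k)%nat /\ Rabs (v k - l) < r.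
Proof.
  intros Hv.
  destruct (Rtopology.Bolzano_Weierstrass v (fun x => a - c <= x <= a + c)
     (Rtopology.compact_P3 _ _)) as [l Hl].
  { intro k. specialize (Hv k). unfold Rabs in Hv; destruct (Rcase_abs (v k - a)); lra. }
  exists l. intros r Hr N.
  destruct (Hl (fun y => Rabs (y - l) < r) N) as [k [Hk1 Hk2]].
  { exists (mkposreal r Hr). intros y Hy. exact Hy. }
  exists k. split; [lia| exact Hk2].
Qed.

Lemma bw2 (u : nat -> pt) (p : pt) (c : R) : (forall k, dist (u k) p <= c) ->
  exists l, forall r, 0 < r -> forall N, exists k, (N <= k)%nat /\ dist (u k) l < r.
Proof.
  intros Hu.
  destruct (bw1 (fun k => fst (u k)) (fst p) c) as [l1 Hl1].
  { intro k. eapply Rle_trans; [apply dist_fst| apply Hu]. }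
  assert (Hch : forall m, exists k, (m <= k)%nat /\ Rabs (fst (u k) - l1) < / (INR m + 1)).
  { intro m. apply Hl1. pose proof (pos_INR m). apply Rinv_0_lt_compat. lra. }
  set (pk := fun m => proj1_sig (constructive_indefinite_description _ (Hch m))).
  assert (Hpk : forall m, (m <= pk m)%nat /\ Rabs (fst (u (pk m)) - l1) < / (INR m + 1)).
  { intro m. unfold pk. destruct (constructive_indefinite_description _ (Hch m)) as [k Hk]. exact Hk. }
  destruct (bw1 (fun m => snd (u (pk m))) (snd p) c) as [l2 Hl2].
  { intro k. eapply Rle_trans; [apply dist_snd| apply Hu]. }
  exists (l1, l2). intros r Hr N.
  destruct (archimed_cor1 (r/2)) as [M [HM1 HM2]]; [lra|].
  destruct (Hl2 (r/2) ltac:(lra) (max N M)) as [m [Hm1 Hm2]].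
  exists (pk m). destruct (Hpk m) as [Hp1 Hp2]. split; [lia|].
  eapply Rle_lt_trans; [apply dist_le_abs|]. simpl.
  assert (/ (INR m + 1) <= / INR M).
  { apply Rinv_le_contravar. apply lt_0_INR; lia.
    assert (INR M <= INR m) by (apply le_INR; lia). lra. }
  simpl in Hm2. lra.
Qed.

Lemma dist_pos_neq (p q : pt) : p <> q -> 0 < dist p q.
Proof.
  intros Hne. destruct (Rle_lt_dec (dist p q) 0) as [Hle|Hlt]; [|exact Hlt].
  exfalso. apply Hne.
  pose proof (dist_fst p q). pose proof (dist_snd p q).
  pose proof (Rabs_pos (fst p - fst q)). pose proof (Rabs_pos (snd p - snd q)).
  assert (E1 : fst p = fst q).
  { destruct (Req_dec (fst p) (fst q)) as [e|e]; [exact e|].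
    pose proof (Rabs_pos_lt (fst p - fst q) ltac:(lra)). lra. }
  assert (E2 : snd p = snd q).
  { destruct (Req_dec (snd p) (snd q)) as [e|e]; [exact e|].
    pose proof (Rabs_pos_lt (snd p - snd q) ltac:(lra)). lra. }
  destruct p, q; simpl in *; subst; reflexivity.
Qed.

Lemma iterZ_nat (f g : pt -> pt) (k : nat) (x : pt) :
  iterZ f g (Z.of_nat k) x = Nat.iter k f x.
Proof.
  destruct k; [reflexivity|]. simpl. rewrite SuccNat2Pos.id_succ. reflexivity.
Qed.

Theorem mainTheorem14 (f g : pt -> pt) (z0 : pt) :
  TA f g ->
  f z0 = z0 ->
  ~ (forall x, nonwandering f x <-> x = z0) ->
  exists y0 z : pt, y0 <> z0 /\ omega_limit f z y0.
Proof.
  intros [_ [_ Hsh]] Hfix Hnot.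
  assert (Hz0 : nonwandering f z0).
  { intros r Hr. exists 1%nat, z0. simpl. rewrite Hfix, dist_refl. repeat split; lra || lia. }
  destruct (not_all_ex_not _ _ Hnot) as [x Hx].
  assert (Hxz : x <> z0).
  { intro E. subst. apply Hx. tauto. }
  assert (Hnw : nonwandering f x).
  { apply NNPP. intro Hn. apply Hx. tauto. }
  set (c := dist x z0 / 3).
  assert (Hc : 0 < c) by (pose proof (dist_pos_neq _ _ Hxz); unfold c; lra).
  destruct (Hsh (fun _ => c)) as [delta [[Hdc Hdp] Hd]].
  { split; [|intros; exact Hc]. intros p e He. exists 1. split; [lra|].
    intros. replace (c - c) with 0 by ring. rewrite Rabs_R0. exact He. }
  pose proof (Hdp x) as Hdx.
  destruct (Hdc x (delta x / 2) ltac:(lra)) as [rho [Hrho Hrho']].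
  set (r := Rmin (Rmin rho (delta x / 4)) c).
  assert (Hr : 0 < r).
  { unfold r. apply Rmin_pos; [apply Rmin_pos|]; lra. }
  assert (Hr1 : r <= rho) by (unfold r; pose proof (Rmin_l (Rmin rho (delta x / 4)) c); pose proof (Rmin_l rho (delta x / 4)); lra).
  assert (Hr2 : r <= delta x / 4) by (unfold r; pose proof (Rmin_l (Rmin rho (delta x / 4)) c); pose proof (Rmin_r rho (delta x / 4)); lra).
  assert (Hr3 : r <= c) by (unfold r; apply Rmin_r).
  destruct (Hnw r Hr) as [n [y [Hn [Hy1 Hy2]]]].
  set (xs := fun k : Z => Nat.iter (Z.to_nat (k mod Z.of_nat n)) f y).
  assert (Hpo : pseudo_orbit f delta xs).
  { intro k. unfold xs.
    assert (Hnz : Z.of_nat n <> 0%Z) by lia.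
    rewrite <- Z.add_mod_idemp_l by exact Hnz.
    pose proof (Z.mod_pos_bound k (Z.of_nat n) ltac:(lia)) as Hb.
    set (j := (k mod Z.of_nat n)%Z) in *.
    destruct (Z.eq_dec (j + 1) (Z.of_nat n)) as [Ej|Ej].
    - rewrite Ej, Z.mod_same by exact Hnz. simpl.
      assert (En : n = S (Z.to_nat j)) by lia.
      replace (f (Nat.iter (Z.to_nat j) f y)) with (Nat.iter n f y) by (rewrite En; reflexivity).
      assert (HH : Rabs (delta x - delta (Nat.iter n f y)) < delta x / 2).
      { apply Hrho'. rewrite dist_sym. lra. }
      pose proof (dist_tri (Nat.iter n f y) x y). rewrite (dist_sym x y) in H.
      unfold Rabs in HH. destruct (Rcase_abs (delta x - delta (Nat.iter n f y))); lra.
    - rewrite Z.mod_small by lia.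
      replace (Z.to_nat (j + 1)) with (S (Z.to_nat j)) by lia. simpl.
      rewrite dist_refl. apply Hdp. }
  destruct (Hd xs Hpo) as [z Hz].
  set (u := fun m => Nat.iter (m * n) f z).
  assert (Hu : forall m, dist (u m) y <= c).
  { intro m. specialize (Hz (Z.of_nat (m * n))). rewrite iterZ_nat in Hz.
    unfold xs in Hz. rewrite Nat2Z.inj_mul, Z.mod_mul in Hz by lia. simpl in Hz.
    rewrite dist_sym. unfold u. lra. }
  destruct (bw2 u y c Hu) as [l Hl].
  exists l, z. split.
  - intro E. subst l. destruct (Hl c Hc 0%nat) as [k [_ Hk]].
    pose proof (dist_tri x y (u k)). pose proof (dist_tri x (u k) z0).
    rewrite (dist_sym x y) in *. pose proof (Hu k). rewrite (dist_sym (u k) y) in *.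
    unfold c in *. lra.
  - intros r' Hr' N. destruct (Hl r' Hr' N) as [k [Hk1 Hk2]].
    exists (k * n)%nat. split; [nia| exact Hk2].
Qed.
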